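(* Let $\mu\in(0,1/2]$, $d=\sqrt{1-3\mu+3\mu^2}$, $\lambda_1=\tfrac32(1-d)$, $\lambda_2=\tfrac32(1+d)$, and consider the planar system $\ddot x-2\dot y=\Omega_x$, $\ddot y+2\dot x=\Omega_y$ with $\Omega(x,y)=\tfrac12(\lambda_2x^2+\lambda_1y^2)+\frac{1}{\sqrt{x^2+y^2}}$ and its equilibrium points $L_{3,4}=(0,\pm\lambda_1^{-1/3})$. Let $A=\begin{pmatrix}0&0&1&0\\0&0&0&1\\ \Omega_{xx}&\Omega_{xy}&0&2\\ \Omega_{xy}&\Omega_{yy}&-2&0\end{pmatrix}$ be the linearization at $L_3$ (or $L_4$), with characteristic polynomial $\lambda^4+\mathcal A\lambda^2+B$, $\mathcal A=4-\Omega_{xx}-\Omega_{yy}$, $B=\Omega_{xx}\Omega_{yy}-\Omega_{xy}^2$, and let $D=\mathcal A^2-4B$. Then there exists a value $\mu_0$ with $D=0$, such that: for $\mu\in(0,\mu_0)$ the eigenvalues of $A$ are $\pm i\omega_1,\pm i\omega_2$; for $\mu=\mu_0$ there is a pair of eigenvalues $\pm i\omega$ of multiplicity $2$; and for $\mu\in(\mu_0,1/2]$ the eigenvalues are $\pm\alpha\pm i\omega$ with $\alpha>0$, $\omega>0$.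
   Context: This is the planar Hill approximation of the restricted four-body problem (in rotated coordinates) near a small mass at a vertex of an equilateral triangle with masses $1-\mu$ and $\mu$. Second derivatives of $\Omega$ are evaluated at the equilibrium point. *)

(* Defs.v *)
From HB Require Import structures.
From mathcomp Require Import all_boot all_order all_algebra.
From mathcomp Require Import all_classical all_reals all_analysis.
From mathcomp Require Import complex.

Set Implicit Arguments.
Unset Strict Implicit.
Unset Printing Implicit Defensive.

Import Order.TTheory GRing.Theory Num.Theory.
Import numFieldNormedType.Exports.
Local Open Scope ring_scope.

Section Hill.
Variable R : realType.

Definition dmu (mu : R) : R := Num.sqrt (1 - 3 * mu + 3 * mu ^+ 2).
Definition lam1 (mu : R) : R := 3 / 2 * (1 - dmu mu).
Definition lam2 (mu : R) : R := 3 / 2 * (1 + dmu mu).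

Definition Omega (mu x y : R) : R :=
  (lam2 mu * x ^+ 2 + lam1 mu * y ^+ 2) / 2 + (Num.sqrt (x ^+ 2 + y ^+ 2))^-1.

Definition Omega_xx (mu : R) (p : R * R) : R :=
  derive1 (fun x => derive1 (fun x' => Omega mu x' p.2) x) p.1.
Definition Omega_yy (mu : R) (p : R * R) : R :=
  derive1 (fun y => derive1 (fun y' => Omega mu p.1 y') y) p.2.
Definition Omega_xy (mu : R) (p : R * R) : R :=
  derive1 (fun y => derive1 (fun x => Omega mu x y) p.1) p.2.

Definition L3 (mu : R) : R * R := (0, lam1 mu `^ (- (1 / 3))).
Definition L4 (mu : R) : R * R := (0, - lam1 mu `^ (- (1 / 3))).

Definition linA (mu : R) (p : R * R) : 'M[R]_4 :=
  \matrix_(i < 4, j < 4)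
    match nat_of_ord i, nat_of_ord j with
    | 0%N, 2%N => 1
    | 1%N, 3%N => 1
    | 2%N, 0%N => Omega_xx mu p
    | 2%N, 1%N => Omega_xy mu p
    | 2%N, 3%N => 2
    | 3%N, 0%N => Omega_xy mu p
    | 3%N, 1%N => Omega_yy mu p
    | 3%N, 2%N => -2
    | _, _ => 0
    end.

(* complexification of A; its eigenvalues are the complex eigenvalues of A *)
Definition linAC (mu : R) (p : R * R) : 'M[R[i]]_4 :=
  map_mx (fun r : R => (r%:C)%C) (linA mu p).

Definition calA (mu : R) (p : R * R) : R := 4 - Omega_xx mu p - Omega_yy mu p.
Definition calB (mu : R) (p : R * R) : R :=
  Omega_xx mu p * Omega_yy mu p - Omega_xy mu p ^+ 2.
Definition discrD (mu : R) (p : R * R) : R := calA mu p ^+ 2 - 4 * calB mu p.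

End Hill.

(* Main.v *)
Require Import Defs.
From HB Require Import structures.
From mathcomp Require Import all_boot all_order all_algebra.
From mathcomp Require Import all_classical all_reals all_analysis.
From mathcomp Require Import complex.
From mathcomp Require Import ring lra.

Import Order.TTheory GRing.Theory Num.Theory.
Import numFieldNormedType.Exports.
Local Open Scope ring_scope.

Section D.
Variable T : comNzRingType.
Definition subf n (f : nat -> nat -> T) (j : 'I_n.+1) := fun a b => f a.+1 (bump j b).
Lemma sub_mxf n (f : nat -> nat -> T) (j : 'I_n.+1) :
  row' ord0 (col' j (\matrix_(i < n.+1, k < n.+1) f i k)) =
  \matrix_(i < n, k < n) @subf n f j i k.
Proof. by apply/matrixP => i k; rewrite !mxE. Qed.
Lemma det2f (f : nat -> nat -> T) :
  \det (\matrix_(i < 2, j < 2) f i j) = 0 + f 0%N 0%N * f 1%N 1%N - f 0%N 1%N * f 1%N 0%N.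
Proof.
rewrite (expand_det_row _ ord0) !big_ord_recl big_ord0 /cofactor !sub_mxf /subf /bump /=.
rewrite !(expand_det_row _ ord0) !big_ord_recl !big_ord0 /cofactor !det_mx00 !mxE /=.
ring.
Qed.
Lemma det3f (f : nat -> nat -> T) :
  \det (\matrix_(i < 3, j < 3) f i j) = 0 + f 0%N 0%N * f 1%N 1%N * f 2%N 2%N - f 0%N 0%N * f 1%N 2%N * f 2%N 1%N - f 0%N 1%N * f 1%N 0%N * f 2%N 2%N + f 0%N 1%N * f 1%N 2%N * f 2%N 0%N + f 0%N 2%N * f 1%N 0%N * f 2%N 1%N - f 0%N 2%N * f 1%N 1%N * f 2%N 0%N.
Proof.
rewrite (expand_det_row _ ord0) !big_ord_recl big_ord0 /cofactor !sub_mxf !det2f /subf !mxE /bump /= ?add0n ?addn0 ?add1n.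
ring.
Qed.
Lemma det4f (f : nat -> nat -> T) :
  \det (\matrix_(i < 4, j < 4) f i j) = 0 + f 0%N 0%N * f 1%N 1%N * f 2%N 2%N * f 3%N 3%N - f 0%N 0%N * f 1%N 1%N * f 2%N 3%N * f 3%N 2%N - f 0%N 0%N * f 1%N 2%N * f 2%N 1%N * f 3%N 3%N + f 0%N 0%N * f 1%N 2%N * f 2%N 3%N * f 3%N 1%N + f 0%N 0%N * f 1%N 3%N * f 2%N 1%N * f 3%N 2%N - f 0%N 0%N * f 1%N 3%N * f 2%N 2%N * f 3%N 1%N - f 0%N 1%N * f 1%N 0%N * f 2%N 2%N * f 3%N 3%N + f 0%N 1%N * f 1%N 0%N * f 2%N 3%N * f 3%N 2%N + f 0%N 1%N * f 1%N 2%N * f 2%N 0%N * f 3%N 3%N - f 0%N 1%N * f 1%N 2%N * f 2%N 3%N * f 3%N 0%N - f 0%N 1%N * f 1%N 3%N * f 2%N 0%N * f 3%N 2%N + f 0%N 1%N * f 1%N 3%N * f 2%N 2%N * f 3%N 0%N + f 0%N 2%N * f 1%N 0%N * f 2%N 1%N * f 3%N 3%N - f 0%N 2%N * f 1%N 0%N * f 2%N 3%N * f 3%N 1%N - f 0%N 2%N * f 1%N 1%N * f 2%N 0%N * f 3%N 3%N + f 0%N 2%N * f 1%N 1%N * f 2%N 3%N * f 3%N 0%N + f 0%N 2%N * f 1%N 3%N * f 2%N 0%N * f 3%N 1%N - f 0%N 2%N * f 1%N 3%N * f 2%N 1%N * f 3%N 0%N - f 0%N 3%N * f 1%N 0%N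 * f 2%N 1%N * f 3%N 2%N + f 0%N 3%N * f 1%N 0%N * f 2%N 2%N * f 3%N 1%N + f 0%N 3%N * f 1%N 1%N * f 2%N 0%N * f 3%N 2%N - f 0%N 3%N * f 1%N 1%N * f 2%N 2%N * f 3%N 0%N - f 0%N 3%N * f 1%N 2%N * f 2%N 0%N * f 3%N 1%N + f 0%N 3%N * f 1%N 2%N * f 2%N 1%N * f 3%N 0%N.
Proof.
rewrite (expand_det_row _ ord0) !big_ord_recl big_ord0 /cofactor !sub_mxf !det3f /subf !mxE /bump /= ?add0n ?addn0 ?add1n.
ring.
Qed.
End D.


Section S.
Variable R : realType.
Local Open Scope complex_scope.

Definition mxf (a b c : R[i]) (i j : nat) : R[i] :=
    match i, j with
    | 0%N, 2%N => 1
    | 1%N, 3%N => 1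
    | 2%N, 0%N => a
    | 2%N, 1%N => b
    | 2%N, 3%N => 2
    | 3%N, 0%N => b
    | 3%N, 1%N => c
    | 3%N, 2%N => -2
    | _, _ => 0
    end.

Lemma linAC_mxf mu p : linAC mu p =
  \matrix_(i < 4, j < 4) mxf (Omega_xx mu p)%:C (Omega_xy mu p)%:C (Omega_yy mu p)%:C i j.
Proof.
apply/matrixP => i j; rewrite !mxE.
case: i => [[|[|[|[|i]]]] Hi] //; case: j => [[|[|[|[|j]]]] Hj] //=; by rewrite ?rmorphN rmorph_nat.
Qed.

Definition gf (a b c : R[i]) (i j : nat) : {poly R[i]} :=
  'X *+ (i == j) - (mxf a b c i j)%:P.

Lemma charf a b c : char_poly (\matrix_(i < 4, j < 4) mxf a b c i j) =
  'X^4 + (4 - a - c)%:P * 'X^2 + (a * c - b ^+ 2)%:P.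
Proof.
rewrite /char_poly.
have -> : char_poly_mx (\matrix_(i < 4, j < 4) mxf a b c i j) =
    \matrix_(i < 4, j < 4) gf a b c i j.
  by apply/matrixP => i j; rewrite !mxE.
rewrite det4f /gf /= ?mulr1n ?mulr0n ?polyC0 ?polyC1 ?rmorphN ?rmorphB ?rmorphM ?rmorphX ?rmorph_nat.
ring.
Qed.
End S.

Section Der.
Variable R : realType.

Lemma der1 (f : R -> R) (x d : R) : is_derive x 1 f d -> derive1 f x = d.
Proof. by move=> H; rewrite derive1E; apply: derive_val. Qed.

Lemma isd_eq (f : R -> R) (x d d' : R) : is_derive x 1 f d' -> d' = d -> is_derive x 1 f d.
Proof. by move=> H <-. Qed.
Arguments isd_eq {f x d d'}.

Arguments der1 {f x d}.
Lemma dsq (t : R) : is_derive t 1 (fun u : R => u ^+ 2) (2 * t).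
Proof.
have -> : (fun u : R => u ^+ 2) = horner ('X^2 : {poly R}) by apply/funext => u /=; rewrite hornerXn.
apply: (isd_eq (is_derive_poly _ _)).
by rewrite derivXn hornerMn hornerXn expr1 mulr_natl.
Qed.

Lemma dadd (f g : R -> R) (x df dg : R) : is_derive x 1 f df -> is_derive x 1 g dg ->
  is_derive x 1 (fun u => f u + g u) (df + dg).
Proof. move=> Hf Hg. exact: is_deriveD. Qed.

Lemma dmul (f g : R -> R) (x df dg : R) : is_derive x 1 f df -> is_derive x 1 g dg ->
  is_derive x 1 (fun u => f u * g u) (f x * dg + g x * df).
Proof. move=> Hf Hg. exact: is_deriveM. Qed.

Lemma dinvsqrt (s : R -> R) (x ds : R) : 0 < s x -> is_derive x 1 s ds ->
  is_derive x 1 (fun t => (Num.sqrt (s t))^-1)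
    (- (Num.sqrt (s x))^-2 * ((2 * Num.sqrt (s x))^-1 * ds)).
Proof.
move=> sx Ds.
have Hc : is_derive x 1 (Num.sqrt \o s) ((2 * Num.sqrt (s x))^-1 * ds).
  apply: is_derive1_comp; exact: is_derive1_sqrt.
have := @is_deriveV R (Num.sqrt \o s) x _ 1 _ Hc.
rewrite /= => H; apply: (isd_eq (H _)).
  by rewrite gt_eqF // sqrtr_gt0.
by [].
Qed.

Lemma dsub (f g : R -> R) (x df dg : R) : is_derive x 1 f df -> is_derive x 1 g dg ->
  is_derive x 1 (fun u => f u - g u) (df - dg).
Proof. move=> Hf Hg. exact: is_deriveB. Qed.

Arguments dadd {f g x df dg}.
Arguments dmul {f g x df dg}.
Arguments dsub {f g x df dg}.
Lemma dcst (k x : R) : is_derive x 1 (fun _ : R => k) 0.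
Proof. exact: is_derive_cst. Qed.

Lemma did (x : R) : is_derive x 1 (fun u : R => u) 1.
Proof. exact: is_derive_id. Qed.

Lemma dinv (f : R -> R) (x df : R) : is_derive x 1 f df -> f x != 0 ->
  is_derive x 1 (fun u => (f u)^-1) (- (f x)^-2 * df).
Proof. move=> H2 H1. apply: (isd_eq (is_deriveV H1 H2)). by []. Qed.

Arguments dinv {f x df}.
Arguments der1 {f x d}.
Lemma dsqrt_s (c t : R) : 0 < t ^+ 2 + c ->
  is_derive t 1 (fun u => Num.sqrt (u ^+ 2 + c)) ((2 * Num.sqrt (t ^+ 2 + c))^-1 * (2 * t + 0)).
Proof.
move=> Hs.
have Hc := dadd (dsq t) (dcst c t).
have := @is_derive1_comp R Num.sqrt (fun u => u ^+ 2 + c) t _ _ (is_derive1_sqrt Hs) Hc.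
by [].
Qed.

Arguments dsqrt_s {c t}.
Lemma dG (a b c t : R) : 0 < t ^+ 2 + c ->
  is_derive t 1 (fun u => (a * u ^+ 2 + b) / 2 + (Num.sqrt (u ^+ 2 + c))^-1)
    (a * t - t * ((t ^+ 2 + c) * Num.sqrt (t ^+ 2 + c))^-1).
Proof.
move=> Hs.
have H1 : is_derive t 1 (fun u => (a * u ^+ 2 + b) / 2) (a * t).
  have -> : (fun u => (a * u ^+ 2 + b) / 2) = (fun u => a / 2 * u ^+ 2 + b / 2).
    by apply/funext => u; rewrite mulrDl mulrAC.
  apply: (isd_eq (dadd (dmul (dcst (a / 2) t) (dsq t)) (dcst (b / 2) t))).
  by field.
have sp : 0 < Num.sqrt (t ^+ 2 + c) by rewrite sqrtr_gt0.
have H2 := dinv (dsqrt_s Hs) (lt0r_neq0 sp).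
apply: (isd_eq (dadd H1 H2)).
have e : Num.sqrt (t ^+ 2 + c) ^+ 2 = t ^+ 2 + c by rewrite sqr_sqrtr // ltW.
move: (lt0r_neq0 sp) e; set q := Num.sqrt _ => qn0 e; rewrite -e.
by field.
Qed.

Lemma dH (a c t : R) : 0 < t ^+ 2 + c ->
  is_derive t 1 (fun u => a * u - u * ((u ^+ 2 + c) * Num.sqrt (u ^+ 2 + c))^-1)
    (a - ((t ^+ 2 + c) * Num.sqrt (t ^+ 2 + c))^-1
       + 3 * t ^+ 2 * ((t ^+ 2 + c) ^+ 2 * Num.sqrt (t ^+ 2 + c))^-1).
Proof.
move=> Hs.
have sp : 0 < Num.sqrt (t ^+ 2 + c) by rewrite sqrtr_gt0.
have HP := dmul (dadd (dsq t) (dcst c t)) (dsqrt_s Hs).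
have Pn0 : (t ^+ 2 + c) * Num.sqrt (t ^+ 2 + c) != 0 by rewrite mulf_neq0 // lt0r_neq0.
have Hk := dinv HP Pn0.
have Hm := dmul (did t) Hk.
have Ha := dmul (dcst a t) (did t).
apply: (isd_eq (dsub Ha Hm)).
have e : Num.sqrt (t ^+ 2 + c) ^+ 2 = t ^+ 2 + c by rewrite sqr_sqrtr // ltW.
move: (lt0r_neq0 sp) e; set q := Num.sqrt _ => qn0 e; rewrite -e.
by field.
Qed.

Arguments dG {a b c t}.
Arguments dH {a c t}.

Lemma Omx (mu x y : R) : 0 < x ^+ 2 + y ^+ 2 ->
  is_derive x 1 (fun t => Omega mu t y)
    (lam2 mu * x - x * ((x ^+ 2 + y ^+ 2) * Num.sqrt (x ^+ 2 + y ^+ 2))^-1).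
Proof. move=> H; exact: (dG (a := lam2 mu) (b := lam1 mu * y ^+ 2) H). Qed.

Lemma Omy (mu x y : R) : 0 < y ^+ 2 + x ^+ 2 ->
  is_derive y 1 (fun t => Omega mu x t)
    (lam1 mu * y - y * ((y ^+ 2 + x ^+ 2) * Num.sqrt (y ^+ 2 + x ^+ 2))^-1).
Proof.
move=> H.
have -> : (fun t => Omega mu x t) = (fun t => (lam1 mu * t ^+ 2 + lam2 mu * x ^+ 2) / 2
   + (Num.sqrt (t ^+ 2 + x ^+ 2))^-1).
  by apply/funext => t; rewrite /Omega [lam2 mu * _ + _]addrC [x ^+ 2 + _]addrC.
exact: (dG (a := lam1 mu) (b := lam2 mu * x ^+ 2) H).
Qed.

Arguments Omx {mu x y}.
Arguments Omy {mu x y}.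
Lemma near_nz (y0 : R) : y0 != 0 -> \forall y \near y0, y != 0.
Proof. move=> H; exact: (@cvgr_neq0 _ _ _ (nbhs y0) _ id y0 cvg_id H). Qed.

Definition Kf (y0 : R) := (y0 ^+ 2 * Num.sqrt (y0 ^+ 2))^-1.

Lemma Oxx (mu y0 : R) : y0 != 0 -> Omega_xx mu (0, y0) = lam2 mu - Kf y0.
Proof.
move=> y0n; rewrite /Omega_xx /=.
have y2 : 0 < y0 ^+ 2 by rewrite exprn_even_gt0 //=.
have pos x : 0 < x ^+ 2 + y0 ^+ 2 by have := sqr_ge0 x; lra.
have -> : (fun x => derive1 (fun x' => Omega mu x' y0) x) =
  (fun x => lam2 mu * x - x * ((x ^+ 2 + y0 ^+ 2) * Num.sqrt (x ^+ 2 + y0 ^+ 2))^-1).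
  by apply/funext => x; apply: der1; exact: Omx.
rewrite (der1 (dH (pos 0))) /Kf.
by rewrite expr0n /= add0r mulr0 mul0r addr0.
Qed.

Lemma Oxy (mu y0 : R) : y0 != 0 -> Omega_xy mu (0, y0) = 0.
Proof.
move=> y0n; rewrite /Omega_xy /=.
rewrite derive1E (@near_eq_derive _ _ _ _ (fun _ => 0)).
  by rewrite derive_cst.
near=> y.
have yn : y != 0 by near: y; exact: near_nz.
have pos : 0 < 0 ^+ 2 + y ^+ 2.
  by rewrite expr0n /= add0r exprn_even_gt0 //=.
by rewrite (der1 (Omx pos)) !mul0r mulr0 subr0.
Unshelve. all: by end_near. Qed.

Lemma Oyy (mu y0 : R) : y0 != 0 -> Omega_yy mu (0, y0) = lam1 mu + 2 * Kf y0.
Proof.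
move=> y0n; rewrite /Omega_yy /=.
have pos (y : R) : y != 0 -> 0 < y ^+ 2 + 0 ^+ 2.
  by move=> yn; rewrite expr0n /= addr0 exprn_even_gt0 //=.
rewrite derive1E (@near_eq_derive _ _ _ _
  (fun y => lam1 mu * y - y * ((y ^+ 2 + 0 ^+ 2) * Num.sqrt (y ^+ 2 + 0 ^+ 2))^-1)).
  rewrite -derive1E (der1 (dH (pos _ y0n))) /Kf.
  have y2 : 0 < y0 ^+ 2 by rewrite exprn_even_gt0 //=.
  rewrite expr0n /= addr0.
  have sp : 0 < Num.sqrt (y0 ^+ 2) by rewrite sqrtr_gt0.
  move: (lt0r_neq0 sp) (lt0r_neq0 y2); set q := Num.sqrt _; set r := y0 ^+ 2 => qn rn.
  by field; rewrite qn rn.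
near=> y.
have yn : y != 0 by near: y; exact: near_nz.
by rewrite (der1 (Omy (pos _ yn))).
Unshelve. all: by end_near. Qed.
End Der.

Section C.
Variable R : realType.
Local Open Scope complex_scope.

Lemma pairG (T : comNzRingType) (u b i : T) : i ^+ 2 = -1 ->
  (u - b * i) * (u + b * i) = u ^+ 2 + b ^+ 2.
Proof.
move=> hi.
have -> : (u - b * i) * (u + b * i) = u ^+ 2 - b ^+ 2 * i ^+ 2 by ring.
rewrite hi; ring.
Qed.

Arguments pairG {T u b i}.
Lemma cplxE (a b : R) : Complex a b = a%:C + b%:C * 'i%C.
Proof. by apply/eqP; rewrite eq_complex /= !mulr0 !mul0r !mulr1 !subr0 !addr0 !add0r !eqxx. Qed.

Lemma mem4 (z a b c d : R[i]) :
  (z \in [:: a; b; c; d]) = ((z - a) * (z - b) * (z - c) * (z - d) == 0).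
Proof.
by rewrite !inE !mulf_eq0 !subr_eq0 !orbA.
Qed.

Lemma mem2 (z a b : R[i]) :
  (z \in [:: a; b]) = ((z - a) * (z - b) == 0).
Proof. by rewrite !inE !mulf_eq0 !subr_eq0. Qed.

Lemma cI (w : R) : Complex 0 w = w%:C * 'i%C.
Proof. by apply/eqP; rewrite eq_complex /= ?(mulr0, mul0r, mulr1, subr0, oppr0, addr0, add0r) ?eqxx. Qed.
Lemma cIN (w : R) : Complex 0 (- w) = - (w%:C * 'i%C).
Proof. by apply/eqP; rewrite eq_complex /= ?(mulr0, mul0r, mulr1, subr0, oppr0, addr0, add0r) ?eqxx. Qed.
Lemma cPP (a w : R) : Complex a w = a%:C + w%:C * 'i%C.
Proof. by apply/eqP; rewrite eq_complex /= ?(mulr0, mul0r, mulr1, subr0, oppr0, addr0, add0r) ?eqxx. Qed.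
Lemma cPN (a w : R) : Complex a (- w) = a%:C - w%:C * 'i%C.
Proof. by apply/eqP; rewrite eq_complex /= ?(mulr0, mul0r, mulr1, subr0, oppr0, addr0, add0r) ?eqxx. Qed.
Lemma cNP (a w : R) : Complex (- a) w = - a%:C + w%:C * 'i%C.
Proof. by apply/eqP; rewrite eq_complex /= ?(mulr0, mul0r, mulr1, subr0, oppr0, addr0, add0r) ?eqxx. Qed.
Lemma cNN (a w : R) : Complex (- a) (- w) = - a%:C - w%:C * 'i%C.
Proof. by apply/eqP; rewrite eq_complex /= ?(mulr0, mul0r, mulr1, subr0, oppr0, addr0, add0r) ?eqxx. Qed.

Lemma rCD (x y : R) : (x + y)%:C = x%:C + y%:C :> R[i].
Proof. exact: rmorphD. Qed.
Lemma rCB (x y : R) : (x - y)%:C = x%:C - y%:C :> R[i].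
Proof. exact: rmorphB. Qed.
Lemma rCM (x y : R) : (x * y)%:C = x%:C * y%:C :> R[i].
Proof. exact: rmorphM. Qed.
Lemma rCN (x : R) : (- x)%:C = - x%:C :> R[i].
Proof. exact: rmorphN. Qed.
Lemma rCX (x : R) n : (x ^+ n)%:C = x%:C ^+ n :> R[i].
Proof. elim: n => [|n IH]; first by rewrite !expr0. by rewrite !exprS rCM IH. Qed.
Lemma rCn n : (n%:R : R)%:C = n%:R :> R[i].
Proof. exact: rmorph_nat. Qed.

Lemma quart1 (A B w1 w2 : R) : A = w1 ^+ 2 + w2 ^+ 2 -> B = w1 ^+ 2 * w2 ^+ 2 ->
  forall z : R[i], (z ^+ 4 + A%:C * z ^+ 2 + B%:C == 0) =
   (z \in [:: Complex 0 w1; Complex 0 (- w1); Complex 0 w2; Complex 0 (- w2)]).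
Proof.
move=> hA hB z; rewrite mem4 (cIN w1) (cIN w2) (cI w1) (cI w2) !opprK.
have -> : (z - w1%:C * 'i%C) * (z + w1%:C * 'i%C) * (z - w2%:C * 'i%C) * (z + w2%:C * 'i%C)
  = (z ^+ 2 + w1%:C ^+ 2) * (z ^+ 2 + w2%:C ^+ 2).
  by rewrite -(pairG (u := z) (b := w1%:C) (@sqr_i R)) -(pairG (u := z) (b := w2%:C) (@sqr_i R)); ring.
by rewrite hA hB rCD rCM !rCX; congr (_ == 0); ring.
Qed.

Lemma quart2 (A B w : R) : A = 2 * w ^+ 2 -> B = w ^+ 4 ->
  forall z : R[i], (z ^+ 4 + A%:C * z ^+ 2 + B%:C == 0) =
   (z \in [:: Complex 0 w; Complex 0 (- w)]).
Proof.
move=> hA hB z; rewrite mem2 (cIN w) (cI w) !opprK.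
rewrite (pairG (@sqr_i R)) hA hB rCM !rCX rCn.
rewrite -[_ ^+ 2 + _ == 0]sqrf_eq0; congr (_ == 0); ring.
Qed.

Lemma quart3 (A B al w : R) : A = 2 * (w ^+ 2 - al ^+ 2) -> B = (al ^+ 2 + w ^+ 2) ^+ 2 ->
  forall z : R[i], (z ^+ 4 + A%:C * z ^+ 2 + B%:C == 0) =
   (z \in [:: Complex al w; Complex al (- w); Complex (- al) w; Complex (- al) (- w)]).
Proof.
move=> hA hB z; rewrite mem4 (cNN al w) (cNP al w) (cPN al w) (cPP al w).
have -> : (z - (al%:C + w%:C * 'i%C)) * (z - (al%:C - w%:C * 'i%C)) *
    (z - (- al%:C + w%:C * 'i%C)) * (z - (- al%:C - w%:C * 'i%C)) =
   ((z - al%:C) ^+ 2 + w%:C ^+ 2) * ((z + al%:C) ^+ 2 + w%:C ^+ 2).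
  rewrite -(pairG (u := z - al%:C) (b := w%:C) (@sqr_i R)).
  rewrite -(pairG (u := z + al%:C) (b := w%:C) (@sqr_i R)); ring.
rewrite hA hB rCM rCB (rCX w 2) (rCX al 2) (rCX (al ^+ 2 + w ^+ 2) 2) (rCD (al ^+ 2) (w ^+ 2)) (rCX w 2) (rCX al 2) rCn.
by congr (_ == 0); ring.
Qed.
End C.
Arguments pairG {T u b i}.

Section E.
Variable R : realType.
Local Open Scope complex_scope.

Lemma eigL (A B : R) (M : 'M[R[i]]_4) :
  char_poly M = 'X^4 + (A%:C)%:P * 'X^2 + (B%:C)%:P ->
  forall z, eigenvalue M z = (z ^+ 4 + A%:C * z ^+ 2 + B%:C == 0).
Proof. by move=> H z; rewrite eigenvalue_root_char /root H !hornerE. Qed.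

Lemma mup2 (A w : R) (M : 'M[R[i]]_4) : 0 < w -> A = 2 * w ^+ 2 ->
  char_poly M = 'X^4 + (A%:C)%:P * 'X^2 + ((w ^+ 4)%:C)%:P ->
  mup (Complex 0 w) (char_poly M) = 2%N /\ mup (Complex 0 (- w)) (char_poly M) = 2%N.
Proof.
move=> w0 hA H.
have iP : ('i%C%:P : {poly R[i]}) ^+ 2 = -1 by rewrite -polyC_exp sqr_i polyCN polyC1.
have e : char_poly M = ('X - (Complex 0 w)%:P) ^+ 2 * ('X - (Complex 0 (- w))%:P) ^+ 2.
  rewrite H (@cIN R w) (@cI R w) polyCN opprK polyCM hA rCM (@rCX R w 2) (@rCX R w 4) rCn.
  rewrite !polyCM polyC_natr -exprMn (pairG iP); ring.
have ne : Complex 0 (- w) != Complex 0 w.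
  by apply/negP => /eqP [] Hw; lra.
have n1 : ('X - (Complex 0 w)%:P) ^+ 2 != 0 by rewrite expf_neq0 // polyXsubC_eq0.
have n2 : ('X - (Complex 0 (- w))%:P) ^+ 2 != 0 by rewrite expf_neq0 // polyXsubC_eq0.
rewrite e; split; rewrite (mupM _ n1 n2) !mup_XsubCX ?eqxx ?ne ?(negbTE ne) ?(eq_sym (Complex 0 w)) ?(negbTE ne) //.
Qed.
End E.

Section F.
Variable R : realType.
Local Open Scope complex_scope.

Lemma charL (mu : R) p : char_poly (linAC mu p) =
  'X^4 + ((calA mu p)%:C)%:P * 'X^2 + ((calB mu p)%:C)%:P.
Proof.
rewrite linAC_mxf charf /calA /calB.
move: (Omega_xx mu p) (Omega_xy mu p) (Omega_yy mu p) => a b c.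
have e1 : (4 - a - c)%:C = 4 - a%:C - c%:C :> R[i].
  by rewrite (@rCB R (4 - a) c) (@rCB R 4 a) (@rCn R 4).
have e2 : (a * c - b ^+ 2)%:C = a%:C * c%:C - b%:C ^+ 2 :> R[i].
  by rewrite (@rCB R (a * c) (b ^+ 2)) (@rCM R a c) (@rCX R b 2).
by rewrite e1 e2.
Qed.

Lemma dfacts (mu : R) : 0 < mu -> mu <= 1 / 2 ->
  [/\ dmu mu ^+ 2 = 1 - 3 * mu + 3 * mu ^+ 2, 1 / 2 <= dmu mu & dmu mu < 1].
Proof.
move=> m0 m1.
have e0 : 0 <= 1 - 3 * mu + 3 * mu ^+ 2 by nra.
have e2 : dmu mu ^+ 2 = 1 - 3 * mu + 3 * mu ^+ 2 by rewrite /dmu sqr_sqrtr.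
have d0 : 0 <= dmu mu by rewrite /dmu sqrtr_ge0.
split => //; nra.
Qed.

Lemma OmegaL (mu : R) L : 0 < mu -> mu <= 1 / 2 -> (L = @L3 R \/ L = @L4 R) ->
  [/\ Omega_xx mu (L mu) = 3 * dmu mu, Omega_xy mu (L mu) = 0 &
      Omega_yy mu (L mu) = 3 * lam1 mu].
Proof.
move=> m0 m1 HL.
have [e2 dlo dhi] := dfacts mu m0 m1.
have l1 : 0 < lam1 mu by rewrite /lam1; lra.
set P := lam1 mu `^ (- (1 / 3)).
have P0 : 0 < P by rewrite powR_gt0.
have P3 : P ^+ 3 = (lam1 mu)^-1.
  have e3 : - (1 / 3) * 3%:R = -1 :> R by field.
  by rewrite -powR_mulrn ?ltW // -powRrM e3 powR_inv1 // ltW.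
have [y0 [Ly y0n K]] : exists y0, [/\ L mu = (0, y0), y0 != 0 & Kf R y0 = lam1 mu].
  have KP : Kf R P = lam1 mu.
    by rewrite /Kf sqrtr_sqr gtr0_norm // -exprSr P3 invrK.
  case: HL => ->; [exists P | exists (- P)]; split => //.
  - by rewrite gt_eqF.
  - by rewrite oppr_eq0 gt_eqF.
  - by rewrite /Kf sqrrN -KP.
rewrite Ly (@Oxx R mu y0 y0n) (@Oxy R mu y0 y0n) (@Oyy R mu y0 y0n) K; split => //.
  by rewrite /lam2 /lam1; lra.
by lra.
Qed.
End F.

Lemma calAB (R : realType) (mu : R) L : 0 < mu -> mu <= 1 / 2 -> (L = @L3 R \/ L = @L4 R) ->
  calA mu (L mu) = (3 * dmu mu - 1) / 2 /\
  calB mu (L mu) = 27 / 2 * dmu mu * (1 - dmu mu).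
Proof.
move=> m0 m1 HL; have [ex ey ez] := @OmegaL R mu L m0 m1 HL.
rewrite /calA /calB ex ey ez.
by rewrite /lam1; split; field.
Qed.

Lemma dcmp (R : realType) (mu mu0 d d0 : R) : d ^+ 2 = 1 - 3 * mu + 3 * mu ^+ 2 ->
  d0 ^+ 2 = 1 - 3 * mu0 + 3 * mu0 ^+ 2 -> 0 <= d -> 0 < d0 -> mu <= 1 / 2 -> mu0 < 1 / 2 ->
  (mu < mu0 -> d0 < d) /\ (mu0 < mu -> d < d0).
Proof.
move=> e1 e2 dp d0p m1 m2.
have key : d ^+ 2 - d0 ^+ 2 = 3 * (mu0 - mu) * (1 - mu - mu0) by rewrite e1 e2; ring.
split => h.
  have h1 : 0 < mu0 - mu by lra.
  have h2 : 0 < 1 - mu - mu0 by lra.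
  have := mulr_gt0 h1 h2; nra.
have h1 : 0 < mu - mu0 by lra.
have h2 : 0 < 1 - mu - mu0 by lra.
have := mulr_gt0 h1 h2; nra.
Qed.

Lemma Dform (R : realType) (d q : R) : q ^+ 2 = 21 ->
  ((3 * d - 1) / 2) ^+ 2 - 4 * (27 / 2 * d * (1 - d)) =
  225 / 4 * (d - (37 + 8 * q) / 75) * (d - (37 - 8 * q) / 75).
Proof.
move=> q2.
have -> : 225 / 4 * (d - (37 + 8 * q) / 75) * (d - (37 - 8 * q) / 75) =
   225 / 4 * (d ^+ 2 - 74 / 75 * d + (1369 - 64 * q ^+ 2) / 5625) by field.
by rewrite q2; field.
Qed.

Arguments Dform {R d q}.
Arguments dcmp {R mu mu0 d d0}.
Arguments calAB {R mu L}.

Theorem proposition2 (R : realType) :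
  exists mu0 : R,
    [/\ 0 < mu0, mu0 < 1 / 2 & discrD mu0 (L3 mu0) = 0] /\
    forall L : R -> R * R, (L = @L3 R \/ L = @L4 R) ->
      [/\ (* mu in (0, mu0): eigenvalues +-i w1, +-i w2 *)
          (forall mu : R, 0 < mu -> mu < mu0 ->
             exists w1 w2 : R, [/\ 0 < w1, 0 < w2, w1 != w2 &
               forall z : R[i], eigenvalue (linAC mu (L mu)) z <->
                 z \in [:: Complex 0 w1; Complex 0 (- w1);
                           Complex 0 w2; Complex 0 (- w2)]]),
          (* mu = mu0: a pair +-i w of multiplicity 2 *)
          (exists w : R, [/\ 0 < w,
               (forall z : R[i], eigenvalue (linAC mu0 (L mu0)) z <->
                 z \in [:: Complex 0 w; Complex 0 (- w)]),
               mup (Complex 0 w) (char_poly (linAC mu0 (L mu0))) = 2%N &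
               mup (Complex 0 (- w)) (char_poly (linAC mu0 (L mu0))) = 2%N]) &
          (* mu in (mu0, 1/2]: eigenvalues +-alpha +- i w *)
          (forall mu : R, mu0 < mu -> mu <= 1 / 2 ->
             exists alpha w : R, [/\ 0 < alpha, 0 < w &
               forall z : R[i], eigenvalue (linAC mu (L mu)) z <->
                 z \in [:: Complex alpha w; Complex alpha (- w);
                           Complex (- alpha) w; Complex (- alpha) (- w)]])].
Proof.
set q : R := Num.sqrt 21.
have q2 : q ^+ 2 = 21 by rewrite sqr_sqrtr.
have q0 : 0 <= q by rewrite sqrtr_ge0.
have qlo : 9 / 2 < q by nra.
have qhi : q < 19 / 4 by nra.
set d0 : R := (37 + 8 * q) / 75.
have d0lo : 1 / 2 < d0 by rewrite /d0; lra.
have d0hi : d0 < 1 by rewrite /d0; lra.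
set s : R := Num.sqrt (12 * d0 ^+ 2 - 3) / 6.
have s2 : s ^+ 2 = (12 * d0 ^+ 2 - 3) / 36.
  by rewrite /s expr_div_n sqr_sqrtr; [field | nra].
have s0 : 0 < s.
  by rewrite /s divr_gt0 // sqrtr_gt0; nra.
have shi : s < 1 / 2 by nra.
set mu0 := 1 / 2 - s.
have m0p : 0 < mu0 by rewrite /mu0; lra.
have m0h : mu0 < 1 / 2 by rewrite /mu0; lra.
have d0e : d0 ^+ 2 = 1 - 3 * mu0 + 3 * mu0 ^+ 2.
  have -> : 1 - 3 * mu0 + 3 * mu0 ^+ 2 = 1 / 4 + 3 * s ^+ 2 by rewrite /mu0; field.
  by rewrite s2; field.
have dm0 : dmu mu0 = d0.
  by rewrite /dmu -d0e sqrtr_sqr gtr0_norm //; lra.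
have d1lo : (37 - 8 * q) / 75 < 1 / 2 by lra.
have Dz : ((3 * d0 - 1) / 2) ^+ 2 - 4 * (27 / 2 * d0 * (1 - d0)) = 0.
  by rewrite (Dform (d := d0) q2) /d0 subrr mulr0 mul0r.
exists mu0; split.
  split => //; rewrite /discrD.
  have [-> ->] := calAB m0p (ltW m0h) (or_introl erefl).
  by rewrite dm0.
move=> L HL; split.
-
  move=> mu m0 mlt.
  have m1 : mu <= 1 / 2 by lra.
  have [e2 dlo dhi] := @dfacts R mu m0 m1.
  have dp : 0 < dmu mu by lra.
  have d0p : 0 < d0 by lra.
  have [dgt _] := dcmp e2 d0e (ltW dp) d0p m1 m0h.
  have dg := dgt mlt.
  have [eA eB] := calAB m0 m1 HL.
  have cp := @charL R mu (L mu); rewrite eA eB in cp.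
  move: cp dlo dhi dp dg; set d := dmu mu => cp dlo dhi dp dg.
  set A := (3 * d - 1) / 2 in cp *; set B := 27 / 2 * d * (1 - d) in cp *.
  have Ap : 0 < A by rewrite /A; lra.
  have Dp : 0 < A ^+ 2 - 4 * B.
    rewrite /A /B (Dform q2) -/d0; apply: mulr_gt0; first apply: mulr_gt0; lra.
  have Bp : 0 < B by rewrite /B; apply: mulr_gt0; [apply: mulr_gt0|]; lra.
  set D := A ^+ 2 - 4 * B in Dp.
  have sD2 : Num.sqrt D ^+ 2 = D by rewrite sqr_sqrtr // ltW.
  have sDp : 0 < Num.sqrt D by rewrite sqrtr_gt0.
  move: sD2 sDp; set sD := Num.sqrt D => sD2 sDp.
  have sDA : sD < A by rewrite /D in sD2; nra.
  have w12 : Num.sqrt ((A + sD) / 2) ^+ 2 = (A + sD) / 2 by rewrite sqr_sqrtr //; lra.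
  have w22 : Num.sqrt ((A - sD) / 2) ^+ 2 = (A - sD) / 2 by rewrite sqr_sqrtr //; lra.
  exists (Num.sqrt ((A + sD) / 2)), (Num.sqrt ((A - sD) / 2)).
  move: w12 w22; set w1 := Num.sqrt ((A + sD) / 2); set w2 := Num.sqrt ((A - sD) / 2) => w12 w22.
  split.
  + by rewrite /w1 sqrtr_gt0; lra.
  + by rewrite /w2 sqrtr_gt0; lra.
  + apply/eqP => h; have : w1 ^+ 2 = w2 ^+ 2 by rewrite h.
    by rewrite w12 w22; lra.
  + move=> z; rewrite (@eigL R A B _ cp) (@quart1 R A B w1 w2) //.
      by rewrite w12 w22; field.
    rewrite w12 w22.
    have -> : (A + sD) / 2 * ((A - sD) / 2) = (A ^+ 2 - sD ^+ 2) / 4 by field.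
    by rewrite sD2 /D; field.
-
  have [e2 dlo dhi] := @dfacts R mu0 m0p (ltW m0h).
  have [eA eB] := calAB m0p (ltW m0h) HL.
  have cp := @charL R mu0 (L mu0); rewrite eA eB dm0 in cp.
  set A := (3 * d0 - 1) / 2 in cp Dz; set B := 27 / 2 * d0 * (1 - d0) in cp Dz.
  have Ap : 0 < A by rewrite /A; lra.
  have w2 : Num.sqrt (A / 2) ^+ 2 = A / 2 by rewrite sqr_sqrtr //; lra.
  move: w2; set w := Num.sqrt (A / 2) => w2.
  have wp : 0 < w by rewrite /w sqrtr_gt0; lra.
  have hA : A = 2 * w ^+ 2 by rewrite w2; field.
  have hB : B = w ^+ 4.
    have -> : w ^+ 4 = (w ^+ 2) ^+ 2 by rewrite -exprM.
    rewrite w2; lra.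
  rewrite hB in cp.
  have [mu1 mu2] := @mup2 R A w _ wp hA cp.
  exists w; split => //.
  move=> z; rewrite (@eigL R A (w ^+ 4) _ cp) (@quart2 R A (w ^+ 4) w) //.
-
  move=> mu mgt m1.
  have m0 : 0 < mu by lra.
  have [e2 dlo dhi] := @dfacts R mu m0 m1.
  have dp : 0 < dmu mu by lra.
  have d0p : 0 < d0 by lra.
  have [_ dlt] := dcmp e2 d0e (ltW dp) d0p m1 m0h.
  have dl := dlt mgt.
  have [eA eB] := calAB m0 m1 HL.
  have cp := @charL R mu (L mu); rewrite eA eB in cp.
  move: cp dlo dhi dp dl; set d := dmu mu => cp dlo dhi dp dl.
  set A := (3 * d - 1) / 2 in cp *; set B := 27 / 2 * d * (1 - d) in cp *.
  have Ap : 0 < A by rewrite /A; lra.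
  have Dn : A ^+ 2 - 4 * B < 0.
    rewrite /A /B (Dform q2) -/d0.
    have h1 : 0 < d0 - d by lra.
    have h2 : 0 < d - (37 - 8 * q) / 75 by lra.
    have := mulr_gt0 h1 h2; nra.
  have Bp : 0 < B by rewrite /B; apply: mulr_gt0; [apply: mulr_gt0|]; lra.
  have sB2 : Num.sqrt B ^+ 2 = B by rewrite sqr_sqrtr // ltW.
  have sBp : 0 < Num.sqrt B by rewrite sqrtr_gt0.
  move: sB2 sBp; set sB := Num.sqrt B => sB2 sBp.
  have sBA : A / 2 < sB by nra.
  have a2 : Num.sqrt ((sB - A / 2) / 2) ^+ 2 = (sB - A / 2) / 2 by rewrite sqr_sqrtr //; lra.
  have w2 : Num.sqrt ((sB + A / 2) / 2) ^+ 2 = (sB + A / 2) / 2 by rewrite sqr_sqrtr //; lra.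
  exists (Num.sqrt ((sB - A / 2) / 2)), (Num.sqrt ((sB + A / 2) / 2)).
  move: a2 w2; set al := Num.sqrt ((sB - A / 2) / 2); set w := Num.sqrt ((sB + A / 2) / 2) => a2 w2.
  split.
  + by rewrite /al sqrtr_gt0; lra.
  + by rewrite /w sqrtr_gt0; lra.
  + move=> z; rewrite (@eigL R A B _ cp) (@quart3 R A B al w) //.
      by rewrite a2 w2; field.
    by rewrite a2 w2 -sB2; congr (_ ^+ 2); field.
Qed.
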